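(* Let $A_i, A_j, A_k, A_l$ be four distinct points lying on a circle in the Euclidean plane, in anticlockwise order (i.e. going around the circle anticlockwise one meets $A_i, A_j, A_k, A_l$ in this cyclic order). Then \[ \begin{vmatrix} x_{kl} & S_{ikl} & S_{jkl}\\ -x_{ij} & S_{ijk} & S_{ijl}\\ 0 & x_{ik} & x_{jl} \end{vmatrix} = \begin{vmatrix} x_{kl} & S_{ikl} & S_{jkl}\\ x_{ij} & S_{ijl} & S_{ijk}\\ 0 & x_{il} & x_{jk} \end{vmatrix} = \begin{vmatrix} x_{jk} & S_{ijk} & S_{jkl}\\ -x_{il} & S_{ikl} & S_{ijl}\\ 0 & x_{ik} & x_{jl} \end{vmatrix} = 0.\]
   Context: For points $A_p=(x_p,y_p)$ in the plane, $x_{pq}:=(x_q-x_p)^2+(y_q-y_p)^2$ denotes the squared distance between $A_p$ and $A_q$, and $S_{pqr}:=2[(x_q-x_p)(y_r-y_p)-(y_q-y_p)(x_r-x_p)]$ denotes four times the signed area of the triangle $A_pA_qA_r$ (positive when $A_p,A_q,A_r$ are ordered anticlockwise). *)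

(* Defs.v *)
From Stdlib Require Import Reals.
Open Scope R_scope.

Definition point := (R * R)%type.

(* x_{pq}: squared distance between A_p and A_q. *)
Definition sqd (P Q : point) : R :=
  (fst Q - fst P)^2 + (snd Q - snd P)^2.

(* S_{pqr} = 2[(x_q-x_p)(y_r-y_p) - (y_q-y_p)(x_r-x_p)]:
   four times the signed area of triangle PQR. *)
Definition S3 (P Q Rr : point) : R :=
  2 * ((fst Q - fst P) * (snd Rr - snd P) - (snd Q - snd P) * (fst Rr - fst P)).

Definition det3 (a b c d e f g h i : R) : R :=
  a * (e * i - f * h) - b * (d * i - f * g) + c * (d * h - e * g).

Definition circ_pt (C : point) (r t : R) : point :=
  (fst C + r * cos t, snd C + r * sin t).

(* A1, A2, A3, A4 lie on a common circle and, going around the circle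
   anticlockwise, one meets A1, A2, A3, A4 in this cyclic order:
   their angular parameters can be chosen strictly increasing within
   one turn. *)
Definition concyclic_ccw (A1 A2 A3 A4 : point) : Prop :=
  exists (C : point) (r t1 t2 t3 t4 : R),
    0 < r /\
    A1 = circ_pt C r t1 /\ A2 = circ_pt C r t2 /\
    A3 = circ_pt C r t3 /\ A4 = circ_pt C r t4 /\
    t1 < t2 /\ t2 < t3 /\ t3 < t4 /\ t4 < t1 + 2 * PI.

(* Main.v *)
Require Import Defs.
From Stdlib Require Import Reals Lra.
Open Scope R_scope.

Lemma key (cx cy rr a1 a2 a3 a4 b1 b2 b3 b4 : R) :
  b1^2+a1^2-rr = 0 -> b2^2+a2^2-rr = 0 -> b3^2+a3^2-rr = 0 -> b4^2+a4^2-rr = 0 ->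
  det3 (sqd (cx+a3, cy+b3) (cx+a4, cy+b4)) (S3 (cx+a1, cy+b1) (cx+a3, cy+b3) (cx+a4, cy+b4)) (S3 (cx+a2, cy+b2) (cx+a3, cy+b3) (cx+a4, cy+b4))
       (- sqd (cx+a1, cy+b1) (cx+a2, cy+b2)) (S3 (cx+a1, cy+b1) (cx+a2, cy+b2) (cx+a3, cy+b3)) (S3 (cx+a1, cy+b1) (cx+a2, cy+b2) (cx+a4, cy+b4))
       0 (sqd (cx+a1, cy+b1) (cx+a3, cy+b3)) (sqd (cx+a2, cy+b2) (cx+a4, cy+b4)) = 0 /\
  det3 (sqd (cx+a3, cy+b3) (cx+a4, cy+b4)) (S3 (cx+a1, cy+b1) (cx+a3, cy+b3) (cx+a4, cy+b4)) (S3 (cx+a2, cy+b2) (cx+a3, cy+b3) (cx+a4, cy+b4))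
       (sqd (cx+a1, cy+b1) (cx+a2, cy+b2)) (S3 (cx+a1, cy+b1) (cx+a2, cy+b2) (cx+a4, cy+b4)) (S3 (cx+a1, cy+b1) (cx+a2, cy+b2) (cx+a3, cy+b3))
       0 (sqd (cx+a1, cy+b1) (cx+a4, cy+b4)) (sqd (cx+a2, cy+b2) (cx+a3, cy+b3)) = 0 /\
  det3 (sqd (cx+a2, cy+b2) (cx+a3, cy+b3)) (S3 (cx+a1, cy+b1) (cx+a2, cy+b2) (cx+a3, cy+b3)) (S3 (cx+a2, cy+b2) (cx+a3, cy+b3) (cx+a4, cy+b4))
       (- sqd (cx+a1, cy+b1) (cx+a4, cy+b4)) (S3 (cx+a1, cy+b1) (cx+a3, cy+b3) (cx+a4, cy+b4)) (S3 (cx+a1, cy+b1) (cx+a2, cy+b2) (cx+a4, cy+b4))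
       0 (sqd (cx+a1, cy+b1) (cx+a3, cy+b3)) (sqd (cx+a2, cy+b2) (cx+a4, cy+b4)) = 0.
Proof.
  intros h1 h2 h3 h4. split; [|split].
  - transitivity ((- 2*a2*a4^2*b4 - 2*a2*a4^2*b1 - 2*a4^3*b2 - 2*a1*a4^2*b2 + 2*a4^3*b3 + 8*a2*a3*a4*b3 - 4*a1*a3*a4*b4 + 8*a1*a3*a4*b2 - 8*a3*a4^2*b3 + 2*a3*a4^2*b1 - 6*a2*a3^2*b3 + 2*a2*a3^2*b1 + 6*a1*a3^2*b4 - 6*a1*a3^2*b2 + 6*a3^2*a4*b3 - 2*a3^2*a4*b1 - 2*a2*b4^3 + 2*a2*b1*b4^2 - 2*a4*b2*b4^2 + 2*a1*b2*b4^2 + 2*a4*b3*b4^2 + 8*a2*b3^2*b4 - 8*a2*b1*b3*b4 - 2*a1*b3*b4^2 - 8*a4*b3^2*b4 + 4*a4*b1*b3*b4 - 6*a2*b3^3 + 6*a2*b1*b3^2 + 2*a1*b3^2*b4 + 8*a4*b2*b3^2 - 2*a1*b2*b3^2 + 6*a4*b3^3 - 6*a4*b1*b3^2 + 2*a3*a4^2*b4 + 2*a3*b4^3 - 8*a3*b2^2*b4 - 8*a2*a3*a4*b2 + 6*a2^2*a3*b2 + 6*a3*b2^3 - 2*a2^2*a3*b1 - 2*a3*b1*b4^2 + 8*a3*b1*b2*b4 - 6*a3*b1*b2^2 + 4*a1*a2*a4*b4 - 6*a1*a2^2*b4 - 2*a1*b2^2*b4 - 8*a4*b2^2*b3 + 2*a1*a4^2*b3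 - 8*a1*a2*a4*b3 + 6*a1*a2^2*b3 + 2*a1*b2^2*b3 + 8*a2*a4^2*b2 - 6*a2^2*a4*b2 + 8*a4*b2^2*b4 - 6*a4*b2^3 + 2*a2^2*a4*b1 - 4*a4*b1*b2*b4 + 6*a4*b1*b2^2 - 2*a1^2*a3*b4 - 8*a3*b2*b3*b4 - 2*a3^3*b4 - 2*a3*b3^2*b4 + 4*a3*b1*b3*b4 - 2*a3*b1^2*b4 - 4*a1*a2*a3*b2 + 2*a1^2*a3*b2 + 8*a3*b2^2*b3 + 2*a3^3*b2 + 2*a3*b2*b3^2 - 4*a3*b1*b2*b3 + 2*a3*b1^2*b2 + 2*a2^3*b4 + 2*a1^2*a2*b4 + 2*a2*b2^2*b4 + 8*a2*b2*b3*b4 - 4*a2*b1*b2*b4 + 2*a2*b1^2*b4 + 2*a1^2*a4*b3 - 4*a1*a3*a4*b3 + 2*a4*b1^2*b3 - 2*a2^3*b3 - 2*a1^2*a2*b3 - 2*a2*b2^2*b3 - 8*a2*b2*b3^2 + 4*a2*b1*b2*b3 + 4*a1*a2*a3*b3 - 2*a2*b1^2*b3 + 4*a1*a2*a4*b2 - 2*a1^2*a4*b2 - 2*a4*b1^2*b2 - 2*a3*b4*rr + 2*a3*b2*rr + 2*a2*b4*rr + 2*a4*b3*rr - 2*a2*b3*rr - 2*a4*b2*rr)*(b1^2+a1^2-rr) + (6*a2*a4^2*b3 - 6*a2*a4^2*b1 + 6*a3*a4^2*b4 - 2*a3*a4^2*b2 - 6*a1*a4^2*b4 + 2*a1*a4^2*b2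 - 4*a2*a3*a4*b3 + 8*a2*a3*a4*b1 - 8*a3^2*a4*b4 + 2*a3^2*a4*b2 + 8*a1*a3*a4*b4 - 2*a2*a3^2*b1 - 2*a1*a3^2*b3 + 2*a3^3*b4 - 2*a1*a3^2*b2 - 2*a3^3*b1 + 2*a2*b3*b4^2 - 2*a2*b1*b4^2 + 8*a1*b3*b4^2 + 6*a3*b4^3 - 6*a3*b2*b4^2 - 6*a1*b4^3 + 6*a1*b2*b4^2 + 8*a3*b1*b4^2 - 2*a2*b3^2*b4 - 8*a3*b3*b4^2 + 4*a3*b2*b3*b4 - 8*a1*b2*b3*b4 + 2*a2*b1*b3^2 - 2*a1*b3^3 + 2*a3*b3^2*b4 + 2*a1*b2*b3^2 - 2*a3*b1*b3^2 + 2*a2^2*a3*b4 - 8*a1*a2*a3*b4 - 4*a2*a3*a4*b4 + 2*a3*b2^2*b4 - 2*a2^2*a3*b1 + 4*a1*a2*a3*b1 - 2*a3*b1*b2^2 - 2*a1*a2^2*b4 + 4*a1^2*a2*b4 + 4*a1*a2*a4*b4 - 2*a1*b2^2*b4 - 8*a1*b1*b4^2 + 4*a1*b1*b2*b4 - 2*a2^2*a4*b3 - 2*a4^3*b3 - 2*a4*b3*b4^2 + 4*a4*b2*b3*b4 - 2*a4*b2^2*b3 - 8*a4*b1*b3*b4 + 8*a4*b1*b2*b3 + 2*a1*a2^2*b3 - 4*a1^2*a2*b3 + 2*a1*b2^2*b3 + 8*a1*b1*b3*b4 - 4*a1*b1*b2*b3 + 2*a2^2*a4*b1 - 4*a1*a2*a4*b1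 + 2*a4^3*b1 + 2*a4*b1*b4^2 - 4*a4*b1*b2*b4 + 2*a4*b1*b2^2 - 4*a1^2*a3*b2 - 4*a3*b1*b2*b3 + 8*a1*a3^2*b1 + 2*a2*a3^2*b4 + 2*a3^2*a4*b3 + 2*a4*b3^3 + 4*a1*a2*a3*b3 + 4*a1^2*a4*b2 - 2*a4*b2*b3^2 - 8*a1*a3*a4*b1 - 6*a3*b4*rr + 8*a1^2*a3*b4 - 8*a3*b1*rr + 6*a3*b2*rr - 4*a1*b4*rr - 10*a4*b3*rr + 8*a1^2*a4*b3 + 4*a1*b3*rr + 8*a4*b1*rr + 8*a4*b4*rr - 8*a1^2*a4*b4 - 6*a4*b2*rr + 8*a3*b3*rr - 8*a1^2*a3*b3 + 2*a2*b4*rr - 2*a2*b3*rr)*(b2^2+a2^2-rr) + (- 6*a2*a4^2*b4 + 6*a1*a4^2*b4 + 2*a4^3*b2 - 2*a4^3*b1 + 4*a2*a3*a4*b4 - 8*a2*a3*a4*b1 - 4*a1*a3*a4*b4 - 6*a3*a4^2*b2 + 6*a3*a4^2*b1 - 2*a2*a3^2*b4 + 2*a2*a3^2*b1 + 2*a1*a3^2*b4 + 2*a3^2*a4*b2 - 2*a1*a3^2*b2 - 2*a3^2*a4*b1 - 6*a2*b4^3 - 8*a2*b1*b4^2 + 6*a1*b4^3 + 2*a4*b2*b4^2 - 8*a1*b2*b4^2 - 2*a4*b1*b4^2 + 8*a2^2*a4*b4 + 8*a2*b2*b4^2 - 8*a1*a2*a4*b4 + 6*a2*b3*b4^2 - 6*a1*b3*b4^2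 + 8*a1*b1*b4^2 - 4*a4*b2*b3*b4 + 8*a4*b1*b2*b4 + 8*a1*b2*b3*b4 - 8*a1*b1*b2*b4 + 4*a4*b1*b3*b4 + 2*a2*a4^2*b3 - 4*a2^2*a4*b3 - 4*a2*b2*b3*b4 - 2*a1*a4^2*b3 + 4*a1*a2^2*b3 + 4*a2*a3*a4*b2 - 2*a3*b2*b4^2 + 4*a2^2*a3*b1 + 2*a3*b1*b4^2 + 8*a1*a2*a3*b4 - 2*a2*b3^2*b4 - 4*a1*a2*a3*b1 + 2*a2*b1*b3^2 - 4*a1^2*a3*b4 + 2*a1*b3^2*b4 - 4*a1*b1*b3*b4 + 2*a4*b2*b3^2 - 8*a4*b1*b2*b3 + 4*a1^2*a3*b2 - 2*a1*b2*b3^2 + 4*a1*b1*b2*b3 + 4*a1*a3*a4*b1 - 2*a4*b1*b3^2 - 4*a2^2*a3*b4 - 4*a1*a2*a3*b2 + 8*a1*a2*a4*b1 - 4*a1^2*a4*b3 - 8*a1*a2^2*b1 + 4*a1^2*a2*b3 + 4*a2*b1*b2*b3 + 4*a2*b4*rr - 8*a1^2*a2*b4 - 8*a4*b4*rr + 8*a1^2*a4*b4 + 10*a2*b1*rr - 2*a1*b3*rr - 2*a3*b1*rr - 6*a2*b3*rr + 4*a1*b4*rr + 8*a4*b2*rr - 8*a1^2*a4*b2 - 2*a1*b2*rr - 8*a4*b1*rr + 8*a4*b3*rr + 2*a3*b2*rr - 8*a2*b2*rr + 8*a1^2*a2*b2)*(b3^2+a3^2-rr) + (2*a2*a4^2*b3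 - 2*a2*a4^2*b1 - 2*a1*a4^2*b3 - 2*a3*a4^2*b2 + 2*a1*a4^2*b2 + 2*a3*a4^2*b1 - 4*a2*a3*a4*b3 + 4*a1*a3*a4*b3 + 4*a3^2*a4*b2 - 8*a1*a3*a4*b2 - 4*a3^2*a4*b1 - 4*a2^2*a4*b3 + 2*a2*b3*b4^2 - 4*a2*b2*b3*b4 + 4*a2^2*a4*b1 - 2*a2*b1*b4^2 + 4*a2*b1*b2*b4 + 8*a1*a2*a4*b3 - 2*a1*b3*b4^2 + 4*a2*a3*a4*b2 - 2*a3*b2*b4^2 - 4*a1*a2*a4*b2 + 2*a1*b2*b4^2 + 2*a3*b1*b4^2 - 8*a3*b1*b2*b4 + 4*a2*a3^2*b4 + 4*a1^2*a2*b4 + 8*a2*b1*b3*b4 - 4*a1*a3^2*b4 - 4*a1^2*a3*b4 - 4*a1*b1*b3*b4 + 4*a1^2*a4*b2 + 4*a1*a3*a4*b1 - 8*a2*b1*b2*b3 + 4*a3*b2*b3*b4 - 4*a3*b1*b3*b4 + 8*a3*b1*b2*b3 - 8*a1*a2*a3*b3 + 8*a1^2*a3*b3 - 4*a2^2*a3*b4 + 8*a1*a2*a3*b2 + 4*a1*a2^2*b4 - 8*a1^2*a2*b2 + 4*a1*b1*b2*b4 - 4*a1^2*a4*b3 - 4*a1*a2*a4*b1 + 10*a2*b3*rr - 10*a2*b1*rr - 8*a1*a2^2*b3 - 10*a3*b2*rr + 8*a3*b4*rr + 10*a3*b1*rr - 8*a2^2*a3*b1 - 8*a2*b4*rr + 8*a2*a3^2*b1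 + 8*a1*a3^2*b2 + 2*a1*b2*rr + 8*a2*b2*rr - 8*a2*a3^2*b2 - 8*a3*b3*rr + 8*a2^2*a3*b3 - 8*a1*a3^2*b1 - 2*a1*b3*rr + 8*a1*a2^2*b1)*(b4^2+a4^2-rr)).
    + unfold det3, sqd, S3; simpl; ring.
    + rewrite h1, h2, h3, h4; ring.
  - transitivity ((- 6*a2*a4^2*b4 + 2*a2*a4^2*b1 + 6*a1*a4^2*b3 - 6*a1*a4^2*b2 + 6*a3*a4^2*b4 - 2*a3*a4^2*b1 + 8*a2*a3*a4*b4 - 4*a1*a3*a4*b3 + 8*a1*a3*a4*b2 - 8*a3^2*a4*b4 + 2*a3^2*a4*b1 - 2*a2*a3^2*b3 - 2*a2*a3^2*b1 - 2*a3^3*b2 - 2*a1*a3^2*b2 + 2*a3^3*b4 + 8*a2*b3*b4^2 - 6*a2*b4^3 + 6*a2*b1*b4^2 + 2*a1*b3*b4^2 + 8*a3*b2*b4^2 - 2*a1*b2*b4^2 + 6*a3*b4^3 - 6*a3*b1*b4^2 - 8*a2*b1*b3*b4 - 2*a1*b3^2*b4 - 8*a3*b3*b4^2 + 4*a3*b1*b3*b4 - 2*a2*b3^3 + 2*a2*b1*b3^2 - 2*a3*b2*b3^2 + 2*a1*b2*b3^2 + 2*a3*b3^2*b4 - 8*a3*b2^2*b4 + 8*a2*a3^2*b2 - 6*a2^2*a3*b2 + 8*a3*b2^2*b3 - 6*a3*b2^3 + 2*a2^2*a3*b1 - 4*a3*b1*b2*b3 + 6*a3*b1*b2^2 + 2*a1*a3^2*b4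 - 8*a1*a2*a3*b4 + 6*a1*a2^2*b4 + 2*a1*b2^2*b4 + 2*a3^2*a4*b3 + 2*a4*b3^3 - 8*a4*b2^2*b3 + 4*a1*a2*a3*b3 - 6*a1*a2^2*b3 - 2*a1*b2^2*b3 - 8*a2*a3*a4*b2 + 6*a2^2*a4*b2 + 6*a4*b2^3 - 2*a2^2*a4*b1 - 2*a4*b1*b3^2 + 8*a4*b1*b2*b3 - 6*a4*b1*b2^2 + 2*a1^2*a3*b4 - 4*a1*a3*a4*b4 + 2*a3*b1^2*b4 + 4*a1*a2*a3*b2 - 2*a1^2*a3*b2 - 2*a3*b1^2*b2 - 2*a2^3*b4 - 2*a1^2*a2*b4 - 2*a2*b2^2*b4 - 8*a2*b2*b4^2 + 4*a2*b1*b2*b4 + 4*a1*a2*a4*b4 - 2*a2*b1^2*b4 - 2*a1^2*a4*b3 - 8*a4*b2*b3*b4 - 2*a4^3*b3 - 2*a4*b3*b4^2 + 4*a4*b1*b3*b4 - 2*a4*b1^2*b3 + 2*a2^3*b3 + 2*a1^2*a2*b3 + 2*a2*b2^2*b3 + 8*a2*b2*b3*b4 - 4*a2*b1*b2*b3 + 2*a2*b1^2*b3 - 4*a1*a2*a4*b2 + 2*a1^2*a4*b2 + 8*a4*b2^2*b4 + 2*a4^3*b2 + 2*a4*b2*b4^2 - 4*a4*b1*b2*b4 + 2*a4*b1^2*b2 + 2*a3*b4*rr - 2*a3*b2*rr - 2*a2*b4*rr - 2*a4*b3*rr + 2*a2*b3*rr + 2*a4*b2*rr)*(b1^2+a1^2-rr)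 + (- 2*a2*a4^2*b1 - 2*a1*a4^2*b4 + 2*a4^3*b3 - 2*a1*a4^2*b2 - 2*a4^3*b1 - 4*a2*a3*a4*b4 + 8*a2*a3*a4*b1 - 8*a3*a4^2*b3 + 2*a3*a4^2*b2 + 8*a1*a3*a4*b3 + 6*a2*a3^2*b4 - 6*a2*a3^2*b1 + 6*a3^2*a4*b3 - 2*a3^2*a4*b2 - 6*a1*a3^2*b3 + 2*a1*a3^2*b2 + 2*a2*b1*b4^2 - 2*a1*b4^3 + 2*a4*b3*b4^2 + 2*a1*b2*b4^2 - 2*a4*b1*b4^2 - 2*a2*b3*b4^2 - 8*a4*b3^2*b4 + 4*a4*b2*b3*b4 + 8*a1*b3^2*b4 - 8*a1*b2*b3*b4 + 2*a2*b3^2*b4 - 2*a2*b1*b3^2 + 6*a4*b3^3 - 6*a4*b2*b3^2 - 6*a1*b3^3 + 6*a1*b2*b3^2 + 8*a4*b1*b3^2 - 2*a2^2*a3*b4 - 2*a3^3*b4 - 2*a3*b3^2*b4 + 4*a3*b2*b3*b4 - 2*a3*b2^2*b4 - 8*a3*b1*b3*b4 + 8*a3*b1*b2*b4 + 2*a2^2*a3*b1 - 4*a1*a2*a3*b1 + 2*a3^3*b1 + 2*a3*b1*b3^2 - 4*a3*b1*b2*b3 + 2*a3*b1*b2^2 + 2*a1*a2^2*b4 - 4*a1^2*a2*b4 + 2*a1*b2^2*b4 + 8*a1*b1*b3*b4 - 4*a1*b1*b2*b4 + 2*a2^2*a4*b3 - 8*a1*a2*a4*b3 - 4*a2*a3*a4*b3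 + 2*a4*b2^2*b3 - 2*a1*a2^2*b3 + 4*a1^2*a2*b3 + 4*a1*a2*a3*b3 - 2*a1*b2^2*b3 - 8*a1*b1*b3^2 + 4*a1*b1*b2*b3 - 2*a2^2*a4*b1 + 4*a1*a2*a4*b1 - 2*a4*b1*b2^2 + 2*a3*a4^2*b4 + 2*a3*b4^3 + 4*a1^2*a3*b2 - 2*a3*b2*b4^2 - 8*a1*a3*a4*b1 + 4*a1*a2*a4*b4 + 2*a2*a4^2*b3 - 4*a1^2*a4*b2 - 4*a4*b1*b2*b4 + 8*a1*a4^2*b1 - 10*a3*b4*rr + 8*a1^2*a3*b4 + 8*a3*b1*rr + 8*a3*b3*rr - 8*a1^2*a3*b3 - 6*a3*b2*rr + 4*a1*b4*rr - 6*a4*b3*rr + 8*a1^2*a4*b3 - 4*a1*b3*rr - 8*a4*b1*rr + 6*a4*b2*rr - 2*a2*b4*rr + 2*a2*b3*rr + 8*a4*b4*rr - 8*a1^2*a4*b4)*(b2^2+a2^2-rr) + (6*a2*a4^2*b4 - 6*a1*a4^2*b4 - 2*a4^3*b2 + 2*a4^3*b1 - 4*a2*a3*a4*b4 + 4*a1*a3*a4*b4 + 6*a3*a4^2*b2 - 8*a1*a3*a4*b2 - 6*a3*a4^2*b1 + 2*a2*a3^2*b4 - 2*a2*a3^2*b1 - 2*a1*a3^2*b4 - 2*a3^2*a4*b2 + 2*a1*a3^2*b2 + 2*a3^2*a4*b1 + 6*a2*b4^3 - 8*a2*b1*b4^2 - 6*a1*b4^3 - 2*a4*b2*b4^2 -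 8*a1*b2*b4^2 + 2*a4*b1*b4^2 - 6*a2*b3*b4^2 + 8*a2*b2*b4^2 + 8*a2*b1*b3*b4 - 8*a2*b1*b2*b4 + 6*a1*b3*b4^2 + 4*a4*b2*b3*b4 - 4*a4*b1*b3*b4 + 8*a4*b1*b2*b4 - 8*a1*a2*a4*b4 + 8*a1^2*a4*b4 + 8*a1*b1*b4^2 - 4*a2^2*a3*b4 + 2*a2*b3^2*b4 - 4*a2*b2*b3*b4 + 4*a2^2*a3*b1 - 2*a2*b1*b3^2 + 4*a2*b1*b2*b3 + 8*a1*a2*a3*b4 - 2*a1*b3^2*b4 + 4*a2*a3*a4*b2 - 2*a4*b2*b3^2 - 4*a1*a2*a3*b2 + 2*a1*b2*b3^2 + 2*a4*b1*b3^2 - 8*a4*b1*b2*b3 - 2*a2*a4^2*b3 + 4*a1^2*a2*b3 + 2*a1*a4^2*b3 - 4*a1^2*a4*b3 - 4*a1*b1*b3*b4 + 4*a1^2*a3*b2 + 2*a3*b2*b4^2 + 4*a1*a3*a4*b1 - 2*a3*b1*b4^2 - 4*a1^2*a3*b4 - 4*a1*a2*a3*b1 - 4*a2^2*a4*b3 + 8*a1*a2*a4*b2 + 4*a1*a2^2*b3 - 8*a1^2*a2*b2 + 4*a1*b1*b2*b3 - 8*a4*b4*rr + 8*a2^2*a4*b4 + 4*a1*b4*rr - 8*a1*a2^2*b4 + 4*a2*b4*rr - 2*a2*b1*rr - 8*a4*b2*rr + 8*a4*b3*rr + 10*a1*b2*rr - 6*a1*b3*rr + 8*a4*b1*rr -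 8*a2^2*a4*b1 - 2*a2*b3*rr - 2*a3*b2*rr + 2*a3*b1*rr - 8*a1*b1*rr + 8*a1*a2^2*b1)*(b3^2+a3^2-rr) + (- 2*a2*a4^2*b3 + 2*a2*a4^2*b1 + 2*a1*a4^2*b3 + 2*a3*a4^2*b2 - 2*a1*a4^2*b2 - 2*a3*a4^2*b1 + 4*a2*a3*a4*b3 - 8*a2*a3*a4*b1 - 4*a1*a3*a4*b3 - 4*a3^2*a4*b2 + 4*a3^2*a4*b1 - 4*a2*a3^2*b4 - 4*a2^2*a3*b4 - 4*a2*b2*b3*b4 + 4*a1*a3^2*b4 + 4*a1*a2^2*b4 + 8*a1*b2*b3*b4 + 4*a2*a3*a4*b2 + 4*a2^2*a4*b1 + 8*a1*a2*a4*b3 - 2*a2*b3*b4^2 - 4*a1*a2*a4*b1 + 2*a2*b1*b4^2 - 4*a1^2*a4*b3 + 2*a1*b3*b4^2 - 4*a1*b1*b3*b4 + 2*a3*b2*b4^2 - 8*a3*b1*b2*b4 + 4*a1^2*a4*b2 - 2*a1*b2*b4^2 + 4*a1*b1*b2*b4 + 4*a1*a3*a4*b1 - 2*a3*b1*b4^2 + 8*a2^2*a3*b3 - 8*a1*a2*a3*b3 - 4*a3*b2*b3*b4 + 8*a3*b1*b2*b3 - 8*a1*b1*b2*b3 + 4*a3*b1*b3*b4 + 8*a1*a2*a3*b1 - 4*a1^2*a3*b4 - 8*a1*a2^2*b1 + 4*a1^2*a2*b4 + 4*a2*b1*b2*b4 - 4*a2^2*a4*b3 - 4*a1*a2*a4*b2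 + 2*a2*b1*rr + 8*a2*a3^2*b1 - 8*a1*b4*rr - 10*a1*b2*rr + 8*a1*a3^2*b2 - 8*a1^2*a2*b3 + 10*a1*b3*rr + 10*a3*b2*rr - 8*a1^2*a3*b2 - 10*a3*b1*rr + 8*a3*b4*rr - 8*a2*a3^2*b2 - 2*a2*b3*rr + 8*a1*b1*rr - 8*a1*a3^2*b1 - 8*a3*b3*rr + 8*a1^2*a3*b3 + 8*a1^2*a2*b2)*(b4^2+a4^2-rr)).
    + unfold det3, sqd, S3; simpl; ring.
    + rewrite h1, h2, h3, h4; ring.
  - transitivity ((- 6*a2*a3^2*b3 + 2*a2*a3^2*b1 + 6*a1*a3^2*b4 - 6*a1*a3^2*b2 + 6*a3^2*a4*b3 - 2*a3^2*a4*b1 + 8*a2^2*a3*b3 - 2*a2^2*a3*b1 - 8*a1*a2*a3*b4 + 4*a1*a2*a3*b2 - 8*a2*a3*a4*b3 + 2*a2^3*b4 - 2*a2^3*b3 + 2*a1*a2^2*b4 + 2*a2^2*a4*b2 + 2*a2^2*a4*b1 - 8*a2*b3^2*b4 - 6*a2*b3^3 + 6*a2*b1*b3^2 + 2*a1*b3^2*b4 - 8*a4*b2*b3^2 - 2*a1*b2*b3^2 + 6*a4*b3^3 - 6*a4*b1*b3^2 + 8*a2*b2*b3^2 - 4*a2*b1*b2*b3 + 2*a1*b2^2*b3 + 8*a4*b1*b2*b3 + 2*a2*b2^2*b4 - 2*a2*b2^2*b3 - 2*a1*b2^2*b4 + 2*a4*b2^3 - 2*a4*b1*b2^2 + 8*a2*b3*b4^2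 + 6*a2*a4^2*b4 - 8*a2^2*a4*b4 + 6*a2*b4^3 - 8*a2*b2*b4^2 - 2*a2*a4^2*b1 - 6*a2*b1*b4^2 + 4*a2*b1*b2*b4 - 6*a1*a4^2*b3 + 8*a1*a2*a4*b3 - 2*a1*a2^2*b3 - 2*a1*b3*b4^2 - 2*a2^2*a3*b2 + 8*a3*b2*b4^2 - 2*a3*b2^3 + 6*a1*a4^2*b2 - 4*a1*a2*a4*b2 + 2*a1*b2*b4^2 - 6*a3*a4^2*b4 + 8*a2*a3*a4*b4 - 6*a3*b4^3 + 2*a3*a4^2*b1 + 6*a3*b1*b4^2 - 8*a3*b1*b2*b4 + 2*a3*b1*b2^2 + 4*a1*a3*a4*b4 - 2*a1^2*a3*b4 - 8*a3*b3*b4^2 - 2*a3^3*b4 - 2*a3*b3^2*b4 + 4*a3*b1*b3*b4 - 2*a3*b1^2*b4 + 2*a1^2*a3*b2 + 8*a3*b2*b3*b4 + 2*a3^3*b2 + 2*a3*b2*b3^2 - 4*a3*b1*b2*b3 + 2*a3*b1^2*b2 - 4*a1*a2*a4*b4 + 2*a1^2*a2*b4 + 2*a2*b1^2*b4 + 2*a4^3*b3 + 2*a1^2*a4*b3 + 2*a4*b3*b4^2 + 8*a4*b3^2*b4 - 4*a4*b1*b3*b4 - 4*a1*a3*a4*b3 + 2*a4*b1^2*b3 - 2*a1^2*a2*b3 + 4*a1*a2*a3*b3 - 2*a2*b1^2*b3 - 2*a4^3*b2 - 2*a1^2*a4*b2 - 2*a4*b2*b4^2 - 8*a4*b2*b3*b4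 + 4*a4*b1*b2*b4 - 2*a4*b1^2*b2 - 2*a3*b4*rr + 2*a3*b2*rr + 2*a2*b4*rr + 2*a4*b3*rr - 2*a2*b3*rr - 2*a4*b2*rr)*(b1^2+a1^2-rr) + (2*a3^3*b4 - 2*a3^3*b1 - 6*a3^2*a4*b3 + 6*a1*a3^2*b3 - 6*a2*a3^2*b4 + 6*a2*a3^2*b1 + 8*a1*a2*a3*b4 + 4*a2*a3*a4*b3 - 4*a1*a2*a3*b3 + 2*a2^2*a3*b4 - 2*a2^2*a3*b1 - 2*a1*a2^2*b4 - 2*a2^2*a4*b3 + 2*a1*a2^2*b3 + 2*a2^2*a4*b1 + 2*a3*b3^2*b4 - 2*a3*b1*b3^2 + 8*a1*b3^2*b4 - 6*a4*b3^3 + 6*a1*b3^3 + 8*a4*b1*b3^2 + 8*a3*b3*b4^2 - 4*a3*b2*b3*b4 - 8*a3*b1*b3*b4 + 4*a3*b1*b2*b3 - 8*a1*b3*b4^2 - 8*a4*b3^2*b4 + 6*a4*b2*b3^2 - 6*a1*b2*b3^2 + 8*a4*b1*b3*b4 - 8*a4*b1*b2*b3 + 8*a1*a3*a4*b3 - 8*a1^2*a3*b3 - 8*a1*b1*b3^2 + 6*a3*a4^2*b4 - 4*a2*a3*a4*b4 + 6*a3*b4^3 - 6*a3*b2*b4^2 + 2*a3*b2^2*b4 - 8*a3*b1*b4^2 + 8*a3*b1*b2*b4 - 2*a3*b1*b2^2 - 6*a1*a4^2*b4 + 4*a1*a2*a4*b4 - 6*a1*b4^3 + 6*a1*b2*b4^2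 - 2*a1*b2^2*b4 - 2*a4^3*b3 + 6*a2*a4^2*b3 - 2*a4*b3*b4^2 + 4*a4*b2*b3*b4 - 2*a4*b2^2*b3 - 8*a1*a2*a4*b3 + 2*a1*b2^2*b3 + 2*a4^3*b1 - 6*a2*a4^2*b1 + 2*a4*b1*b4^2 - 4*a4*b1*b2*b4 + 2*a4*b1*b2^2 - 4*a1^2*a2*b4 - 2*a2*b3^2*b4 - 4*a1*a2*a3*b1 + 2*a2*b1*b3^2 + 2*a3^2*a4*b2 - 4*a1^2*a4*b2 - 2*a1*a3^2*b2 + 4*a1^2*a3*b2 + 4*a1*b1*b2*b3 + 4*a1^2*a2*b3 + 2*a2*b3*b4^2 + 4*a1*a2*a4*b1 - 2*a2*b1*b4^2 - 2*a3*a4^2*b2 - 8*a1*a3*a4*b4 + 2*a1*a4^2*b2 + 8*a1^2*a4*b4 + 8*a1*b1*b4^2 - 4*a1*b1*b2*b4 + 4*a1*b3*rr + 2*a3*b4*rr - 4*a1*b4*rr - 2*a4*b3*rr + 2*a2*b4*rr - 2*a2*b3*rr + 2*a4*b2*rr - 2*a3*b2*rr)*(b2^2+a2^2-rr) + (- 2*a2*a3^2*b4 + 2*a2*a3^2*b1 + 2*a1*a3^2*b4 + 2*a3^2*a4*b2 - 2*a1*a3^2*b2 - 2*a3^2*a4*b1 + 4*a2^2*a3*b4 - 4*a2^2*a3*b1 - 4*a2*a3*a4*b2 + 4*a1*a2*a3*b2 + 8*a2*a3*a4*b1 - 4*a2*a3*a4*b4 - 2*a3*b2*b4^2 - 2*a3*a4^2*b1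 + 2*a3*b1*b4^2 - 2*a1*a4^2*b4 - 2*a1*b4^3 + 2*a2*a4^2*b3 + 4*a2^2*a4*b3 + 4*a4*b2*b3*b4 - 2*a1*a4^2*b3 - 4*a1*a2^2*b3 + 2*a1*b3*b4^2 - 8*a1*b2*b3*b4 - 2*a4^3*b1 - 2*a4*b1*b4^2 - 2*a2*b3^2*b4 + 8*a2*b1*b3*b4 - 4*a1*a2*a3*b1 + 2*a2*b1*b3^2 - 4*a1^2*a3*b4 + 2*a1*b3^2*b4 - 4*a1*b1*b3*b4 - 8*a1*a3*a4*b2 + 2*a4*b2*b3^2 + 4*a1^2*a3*b2 - 2*a1*b2*b3^2 + 4*a1*b1*b2*b3 + 4*a1*a3*a4*b1 - 2*a4*b1*b3^2 + 2*a4^3*b2 - 8*a2*a4^2*b2 + 2*a4*b2*b4^2 + 8*a1*a2*a4*b2 + 4*a2*b2*b3*b4 - 8*a2*b1*b2*b4 - 4*a2*b1*b2*b3 + 8*a1*b1*b2*b4 + 4*a1*a3*a4*b4 + 2*a3*a4^2*b2 + 2*a2*a4^2*b4 + 2*a2*b4^3 + 8*a1*a4^2*b1 - 4*a1^2*a4*b3 - 4*a4*b1*b3*b4 - 8*a1*a2*a4*b1 + 4*a1^2*a2*b3 - 2*a2*b3*b4^2 - 2*a3*b1*rr + 12*a1*b4*rr - 8*a1*a2^2*b4 + 6*a1*b3*rr - 8*a2^2*a4*b1 - 12*a2*b4*rr + 8*a1^2*a2*b4 + 10*a2*b1*rr - 6*a2*b3*rr + 8*a1^2*a4*b2 - 10*a1*b2*rr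 + 8*a2^2*a4*b4 + 8*a2*b2*rr - 8*a1^2*a2*b2 - 8*a1*b1*rr + 8*a1*a2^2*b1 + 2*a3*b2*rr - 8*a1^2*a4*b4)*(b3^2+a3^2-rr) + (4*a1*a3^2*b4 + 4*a3^2*a4*b1 - 4*a2*a3^2*b4 + 8*a2*a3^2*b2 - 8*a1*a2*a3*b2 + 4*a2*a3*a4*b3 - 8*a2*a3*a4*b1 - 4*a2^2*a3*b4 + 4*a1*a2^2*b4 - 4*a2^2*a4*b3 + 4*a2^2*a4*b1 - 4*a3*b2*b3*b4 + 8*a1*b2*b3*b4 + 2*a2*a4^2*b3 + 2*a2*b3*b4^2 - 4*a2*b2*b3*b4 - 8*a2*b1*b3*b4 + 8*a2*b1*b2*b3 - 2*a2*a4^2*b1 + 4*a1*a2*a4*b1 - 2*a2*b1*b4^2 + 4*a2*b1*b2*b4 - 2*a1*a4^2*b3 + 4*a1^2*a4*b3 - 2*a1*b3*b4^2 + 4*a1*b1*b3*b4 - 8*a1*b1*b2*b3 - 2*a3*a4^2*b2 + 8*a1*a3*a4*b2 + 4*a2*a3*a4*b2 - 2*a3*b2*b4^2 + 2*a1*a4^2*b2 - 4*a1^2*a4*b2 - 4*a1*a2*a4*b2 + 2*a1*b2*b4^2 - 4*a1*b1*b2*b4 + 2*a3*a4^2*b1 - 4*a1*a3*a4*b1 + 2*a3*b1*b4^2 + 4*a1^2*a3*b4 + 4*a3*b1*b3*b4 - 8*a1*a3^2*b1 - 4*a1^2*a2*b4 + 8*a1*a2*a3*b1 - 4*a1*a3*a4*b3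 - 4*a3^2*a4*b2 - 2*a3*b2*rr + 2*a3*b1*rr - 8*a1*b4*rr - 10*a1*b3*rr - 8*a2^2*a3*b3 + 8*a1*a2^2*b3 + 8*a2^2*a3*b1 + 10*a1*b2*rr + 10*a2*b3*rr - 8*a1^2*a2*b3 - 10*a2*b1*rr + 8*a2*b4*rr - 8*a2*b2*rr + 8*a1^2*a2*b2 - 8*a1^2*a3*b2 + 8*a1*b1*rr - 8*a1*a2^2*b1 + 8*a1^2*a3*b3)*(b4^2+a4^2-rr)).
    + unfold det3, sqd, S3; simpl; ring.
    + rewrite h1, h2, h3, h4; ring.
Qed.

Lemma onc (r t : R) : (r * sin t)^2 + (r * cos t)^2 - r^2 = 0.
Proof.
  replace ((r * sin t)^2 + (r * cos t)^2 - r^2) with (r^2 * (sin t ^2 + cos t ^2) - r^2) by ring.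
  pose proof (sin2_cos2 t) as H. unfold Rsqr in H. replace (sin t ^2 + cos t ^2) with 1 by (rewrite <- H; ring). ring.
Qed.

Theorem theorem2p6 (Ai Aj Ak Al : point) :
  Ai <> Aj -> Ai <> Ak -> Ai <> Al -> Aj <> Ak -> Aj <> Al -> Ak <> Al ->
  concyclic_ccw Ai Aj Ak Al ->
  det3 (sqd Ak Al) (S3 Ai Ak Al) (S3 Aj Ak Al)
       (- sqd Ai Aj) (S3 Ai Aj Ak) (S3 Ai Aj Al)
       0 (sqd Ai Ak) (sqd Aj Al) = 0 /\
  det3 (sqd Ak Al) (S3 Ai Ak Al) (S3 Aj Ak Al)
       (sqd Ai Aj) (S3 Ai Aj Al) (S3 Ai Aj Ak)
       0 (sqd Ai Al) (sqd Aj Ak) = 0 /\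
  det3 (sqd Aj Ak) (S3 Ai Aj Ak) (S3 Aj Ak Al)
       (- sqd Ai Al) (S3 Ai Ak Al) (S3 Ai Aj Al)
       0 (sqd Ai Ak) (sqd Aj Al) = 0.
Proof.
  intros _ _ _ _ _ _ [C [r [t1 [t2 [t3 [t4 [_ [e1 [e2 [e3 [e4 _]]]]]]]]]]].
  subst. unfold circ_pt.
  apply (key (fst C) (snd C) (r^2)); apply onc.
Qed.
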